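(* Let $\sigma:\mathbb{R}\to\mathbb{R}$ be bounded and differentiable with bounded derivative. Let $d_1,d_2,\kappa,L,n,K_n\in\mathbb{N}$ with $\kappa\le\min\{d_1,d_2\}$ and $L\ge2$, and consider the network $f_{\mathbf{w}}$ described in the context with architecture $M_1=M_{L+1}=\kappa$, $M_2=\dots=M_L=1$, $k_1=\dots=k_{L-1}=2\kappa^2$, $k_0=k_L=1$. Let $(\mathbf{X}_1,Y_1),\dots,(\mathbf{X}_n,Y_n)\in[0,1]^{D}\times\{0,1\}$, let $c_4>0$, and define $$F_n(\mathbf{w})=\frac1n\sum_{i=1}^n|Y_i-f_{\mathbf{w}}(\mathbf{X}_i)|^2+c_4\sum_{k=1}^{K_n}w_k^2 .$$ Let $t_n,L_n>0$ with $t_n\ge L_n$, let $\gamma_n^*\ge1$, $B_n\ge1$, and let $\mathbf{w},\mathbf{v}$ be weight vectors such that $|w_k|\le\gamma_n^*$ for $k=1,\dots,K_n$, $|w^{(r)}_{s_2,k}|\le B_n$ and $|w^{(r)}_{t_1,t_2,s_1,s_2,k}|\le B_n$ for all indices with $r=2,\dots,L$, and $$\|\mathbf{w}-\mathbf{v}\|_\infty^2\le\frac{2t_n}{L_n}\max\{F_n(\mathbf{v}),1\}.$$ Then $$\|(\nabla_{\mathbf{w}}F_n)(\mathbf{w})\|\le c_8\cdot K_n^{3/2}\cdot B_n^{2L}\cdot(\gamma_n^* )^2\cdot\sqrt{\frac{t_n}{L_n}\max\{F_n(\mathbf{v}),1\}},$$ where $c_8>0$ is a constant not depending on $n$, $K_n$,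 $B_n$, $\gamma_n^*$, $t_n$, $L_n$, $\mathbf{w}$, $\mathbf{v}$ or the data.
   Context: $D=\{1,\dots,d_1\}\times\{1,\dots,d_2\}$ and $[0,1]^D$ is the set of families $(x_{i,j})_{(i,j)\in D}$ with entries in $[0,1]$. Network: for $k\in\{1,\dots,K_n\}$ and $(i,j)\in D$, $o^{(0)}_{(i,j),1,k}=x_{i,j}$ and for $r=1,\dots,L$, $s_2\in\{1,\dots,k_r\}$, $$o^{(r)}_{(i,j),s_2,k}=\sigma\Big(\sum_{s_1=1}^{k_{r-1}}\sum_{t_1,t_2\in\{1,\dots,M_r\},\,(i+t_1-1,j+t_2-1)\in D} w^{(r)}_{t_1,t_2,s_1,s_2,k}\, o^{(r-1)}_{(i+t_1-1,j+t_2-1),s_1,k}+w^{(r)}_{s_2,k}\Big),$$ $f_{\mathbf{w}_k,\mathbf{w}_{bias,k}}(\mathbf{x})=\frac{1}{(d_1-M_{L+1}+1)(d_2-M_{L+1}+1)}\sum_{i=1}^{d_1-M_{L+1}+1}\sum_{j=1}^{d_2-M_{L+1}+1}o^{(L)}_{(i,j),1,k}$, and $f_{\mathbf{w}}(\mathbf{x})=\sum_{k=1}^{K_n}w_kf_{\mathbf{w}_k,\mathbf{w}_{bias,k}}(\mathbf{x})$. The weight vector $\mathbf{w}$ collects all $w_k$, $w^{(r)}_{t_1,t_2,s_1,s_2,k}$, $w^{(r)}_{s_2,k}$; $\nabla_{\mathbf{w}}$ is the gradient with respect to all these components, $\|\cdot\|$ the Euclidean norm and $\|\cdot\|_\infty$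 the maximum of absolute values of components. *)

(* Defs.v *)
From Stdlib Require Import Reals Lra Lia.
From Coquelicot Require Import Coquelicot.
Open Scope R_scope.

(* sum1 n f = f 1 + ... + f n  (1-based, as in the paper) *)
Fixpoint sum1 (n : nat) (f : nat -> R) : R :=
  match n with O => 0 | S m => sum1 m f + f (S m) end.

(* max1 n f = max(0, f 1, ..., f n); used only for nonnegative f *)
Fixpoint max1 (n : nat) (f : nat -> R) : R :=
  match n with O => 0 | S m => Rmax (max1 m f) (f (S m)) end.

(* Indices of the components of the weight vector w:
   Wout k            = w_k
   Wconv r t1 t2 s1 s2 k = w^{(r)}_{t1,t2,s1,s2,k}
   Wbias r s2 k      = w^{(r)}_{s2,k}                                  *)
Inductive widx : Type :=
| Wout  (k : nat)
| Wconv (r t1 t2 s1 s2 k : nat)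
| Wbias (r s2 k : nat).

Definition widx_eq_dec (a b : widx) : {a = b} + {a <> b}.
Proof. decide equality; apply Nat.eq_dec. Defined.

(* A weight vector: value of each component (only indices in the valid
   ranges below are used). *)
Definition wvec := widx -> R.

Definition upd (w : wvec) (i : widx) (x : R) : wvec :=
  fun j => if widx_eq_dec i j then x else w j.

Definition Msz (kappa L r : nat) : nat :=
  if Nat.eqb r 1 then kappa else if Nat.eqb r (S L) then kappa else 1.
Definition ksz (kappa L r : nat) : nat :=
  if Nat.eqb r 0 then 1 else if Nat.eqb r L then 1 else (2 * kappa * kappa)%nat.

(* o^{(r)}_{(i,j),s2,k}; input x : pixel (i,j) |-> x_{i,j} *)
Fixpoint outp (sigma : R -> R) (d1 d2 kappa L : nat) (w : wvec)
  (x : nat -> nat -> R) (r i j s2 k : nat) {struct r} : R :=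
  match r with
  | O => x i j
  | S r' =>
      sigma (sum1 (ksz kappa L r') (fun s1 =>
               sum1 (Msz kappa L r) (fun t1 =>
               sum1 (Msz kappa L r) (fun t2 =>
                 if andb (Nat.leb (i + t1 - 1) d1) (Nat.leb (j + t2 - 1) d2)
                 then w (Wconv r t1 t2 s1 s2 k) *
                      outp sigma d1 d2 kappa L w x r' (i + t1 - 1) (j + t2 - 1) s1 k
                 else 0)))
             + w (Wbias r s2 k))
  end.

Definition fk (sigma : R -> R) (d1 d2 kappa L : nat) (w : wvec)
  (x : nat -> nat -> R) (k : nat) : R :=
  let M := Msz kappa L (S L) in
  / (INR (d1 - M + 1) * INR (d2 - M + 1)) *
  sum1 (d1 - M + 1) (fun i => sum1 (d2 - M + 1) (fun j =>
    outp sigma d1 d2 kappa L w x L i j 1 k)).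

Definition fnet (sigma : R -> R) (d1 d2 kappa L Kn : nat) (w : wvec)
  (x : nat -> nat -> R) : R :=
  sum1 Kn (fun k => w (Wout k) * fk sigma d1 d2 kappa L w x k).

(* F_n(w); data X i = image of the i-th sample, Y i its label *)
Definition Femp (sigma : R -> R) (d1 d2 kappa L n Kn : nat) (c4 : R)
  (X : nat -> nat -> nat -> R) (Y : nat -> R) (w : wvec) : R :=
  / INR n * sum1 n (fun i => (Y i - fnet sigma d1 d2 kappa L Kn w (X i)) ^ 2)
  + c4 * sum1 Kn (fun k => w (Wout k) ^ 2).

Definition sum_idx (kappa L Kn : nat) (g : widx -> R) : R :=
  sum1 Kn (fun k => g (Wout k))
  + sum1 L (fun r => sum1 (Msz kappa L r) (fun t1 => sum1 (Msz kappa L r) (fun t2 =>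
      sum1 (ksz kappa L (r - 1)) (fun s1 => sum1 (ksz kappa L r) (fun s2 =>
      sum1 Kn (fun k => g (Wconv r t1 t2 s1 s2 k)))))))
  + sum1 L (fun r => sum1 (ksz kappa L r) (fun s2 => sum1 Kn (fun k => g (Wbias r s2 k)))).

Definition max_idx (kappa L Kn : nat) (g : widx -> R) : R :=
  Rmax (max1 Kn (fun k => g (Wout k)))
  (Rmax (max1 L (fun r => max1 (Msz kappa L r) (fun t1 => max1 (Msz kappa L r) (fun t2 =>
      max1 (ksz kappa L (r - 1)) (fun s1 => max1 (ksz kappa L r) (fun s2 =>
      max1 Kn (fun k => g (Wconv r t1 t2 s1 s2 k))))))))
  (max1 L (fun r => max1 (ksz kappa L r) (fun s2 => max1 Kn (fun k => g (Wbias r s2 k)))))).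

Definition partial (F : wvec -> R) (w : wvec) (i : widx) : R :=
  Derive (fun x => F (upd w i x)) (w i).

Definition grad_norm (kappa L Kn : nat) (F : wvec -> R) (w : wvec) : R :=
  sqrt (sum_idx kappa L Kn (fun i => partial F w i ^ 2)).

Definition inf_dist (kappa L Kn : nat) (w v : wvec) : R :=
  max_idx kappa L Kn (fun i => Rabs (w i - v i)).

(* Main.v *)
Require Import Defs.
From Stdlib Require Import Reals Lra Lia FunctionalExtensionality.
From Coquelicot Require Import Coquelicot.
Open Scope R_scope.

Lemma isd_plus (f g : R -> R) x df dg :
  is_derive f x df -> is_derive g x dg -> is_derive (fun t => f t + g t) x (df + dg).
Proof. intros; apply (is_derive_plus f g x df dg); auto. Qed.
Lemma isd_mult (f g : R -> R) x df dg :
  is_derive f x df -> is_derive g x dg -> is_derive (fun t => f t * g t) x (df * g x + f x * dg).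
Proof. intros; apply (is_derive_mult f g x df dg); auto. intros; apply Rmult_comm. Qed.
Lemma isd_comp (f g : R -> R) x df dg :
  is_derive f (g x) df -> is_derive g x dg -> is_derive (fun t => f (g t)) x (dg * df).
Proof. intros; apply (is_derive_comp f g x df dg); auto. Qed.
Lemma isd_const (a x : R) : is_derive (fun _ => a) x 0.
Proof. apply (is_derive_const a x). Qed.
Lemma isd_id (x : R) : is_derive (fun t => t) x 1.
Proof. apply (is_derive_id x). Qed.

Definition Dbd (h : R -> R) (x0 b : R) := exists d, is_derive h x0 d /\ Rabs d <= b.

Lemma Dbd_le h x0 b b' : b <= b' -> Dbd h x0 b -> Dbd h x0 b'.
Proof. intros H [d [H1 H2]]; exists d; split; auto; lra. Qed.
Lemma Dbd_ext h g x0 b : (forall t, h t = g t) -> Dbd h x0 b -> Dbd g x0 b.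
Proof. intros E [d [H1 H2]]; exists d; split; auto; eapply is_derive_ext; eauto. Qed.
Lemma Dbd_const a x0 : Dbd (fun _ => a) x0 0.
Proof. exists 0; split; [apply isd_const| rewrite Rabs_R0; lra]. Qed.
Lemma Dbd_constf h x0 : (forall t, h t = h x0) -> Dbd h x0 0.
Proof. intros E; apply Dbd_ext with (fun _ => h x0); [intros; auto|apply Dbd_const]. Qed.
Lemma Dbd_plus f g x0 bf bg : Dbd f x0 bf -> Dbd g x0 bg -> Dbd (fun t => f t + g t) x0 (bf + bg).
Proof. intros [d [H1 H2]] [e [H3 H4]]; exists (d+e); split; [apply isd_plus; auto|].
  eapply Rle_trans; [apply Rabs_triang|lra]. Qed.
Lemma Dbd_minus f g x0 bf bg : Dbd f x0 bf -> Dbd g x0 bg -> Dbd (fun t => f t - g t) x0 (bf + bg).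
Proof. intros [d [H1 H2]] [e [H3 H4]]; exists (d-e).
  split. apply (is_derive_minus f g x0 d e); auto.
  unfold Rminus; eapply Rle_trans; [apply Rabs_triang|rewrite Rabs_Ropp; lra]. Qed.
Lemma Dbd_mult f g x0 bf bg vf vg : Dbd f x0 bf -> Dbd g x0 bg ->
  Rabs (f x0) <= vf -> Rabs (g x0) <= vg ->
  Dbd (fun t => f t * g t) x0 (bf * vg + vf * bg).
Proof. intros [d [H1 H2]] [e [H3 H4]] H5 H6; eexists; split; [apply isd_mult; eauto|].
  eapply Rle_trans; [apply Rabs_triang|rewrite !Rabs_mult].
  apply Rplus_le_compat; apply Rmult_le_compat; auto using Rabs_pos. Qed.
Lemma Dbd_scal f x0 c b : Dbd f x0 b -> Dbd (fun t => c * f t) x0 (Rabs c * b).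
Proof. intros [d [H1 H2]]; exists (c*d); split; [apply is_derive_scal; auto|].
  rewrite Rabs_mult; apply Rmult_le_compat_l; auto using Rabs_pos. Qed.
Lemma Dbd_sq f x0 b v : Dbd f x0 b -> Rabs (f x0) <= v -> Dbd (fun t => f t ^ 2) x0 (2 * v * b).
Proof. intros H1 H2. apply Dbd_ext with (fun t => f t * f t); [intros; ring|].
  eapply Dbd_le; [|apply (Dbd_mult f f x0 b b v v); auto]. lra. Qed.
Lemma Dbd_comp (s : R -> R) Sd g x0 b :
  (forall x, ex_derive s x) -> (forall x, Rabs (Derive s x) <= Sd) ->
  Dbd g x0 b -> Dbd (fun t => s (g t)) x0 (b * Sd).
Proof. intros Hs HS [d [H1 H2]]. exists (d * Derive s (g x0)); split.
  apply isd_comp; auto. apply Derive_correct; auto.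
  rewrite Rabs_mult; apply Rmult_le_compat; auto using Rabs_pos. Qed.
Lemma Dbd_upd w i j : Dbd (fun x => upd w i x j) (w i) 1.
Proof. unfold upd; destruct (widx_eq_dec i j).
  exists 1; split; [apply isd_id|rewrite Rabs_R1; lra].
  eapply Dbd_le; [|apply Dbd_const]; lra. Qed.

Lemma sum1_S n f : sum1 (S n) f = sum1 n f + f (S n).
Proof. reflexivity. Qed.
Lemma sum1_ext n f g : (forall s, (1 <= s <= n)%nat -> f s = g s) -> sum1 n f = sum1 n g.
Proof. induction n; simpl; intros; auto. rewrite IHn, H; [auto|lia|intros; apply H; lia]. Qed.
Lemma sum1_le n f g : (forall s, (1 <= s <= n)%nat -> f s <= g s) -> sum1 n f <= sum1 n g.
Proof. induction n; simpl; intros; [lra|]. apply Rplus_le_compat; auto. apply IHn; intros; apply H; lia. apply H; lia. Qed.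
Lemma sum1_const n c : sum1 n (fun _ => c) = INR n * c.
Proof. induction n; simpl sum1; [simpl; ring|]. rewrite IHn, S_INR; ring. Qed.
Lemma sum1_abs n f : Rabs (sum1 n f) <= sum1 n (fun s => Rabs (f s)).
Proof. induction n; simpl sum1; [rewrite Rabs_R0; lra|]. eapply Rle_trans; [apply Rabs_triang|lra]. Qed.
Lemma sum1_abs_bd n f c : (forall s, (1 <= s <= n)%nat -> Rabs (f s) <= c) -> Rabs (sum1 n f) <= INR n * c.
Proof. intros; rewrite <- sum1_const; eapply Rle_trans; [apply sum1_abs|apply sum1_le; auto]. Qed.
Lemma sum1_scal n c f : sum1 n (fun s => c * f s) = c * sum1 n f.
Proof. induction n; simpl; [ring|rewrite IHn; ring]. Qed.
Lemma sum1_nonneg n f : (forall s, (1 <= s <= n)%nat -> 0 <= f s) -> 0 <= sum1 n f.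
Proof. intros; apply Rle_trans with (sum1 n (fun _ => 0)); [rewrite sum1_const; lra|apply sum1_le; auto]. Qed.
Lemma sum1_delta n k0 c : 0 <= c -> sum1 n (fun k => if Nat.eqb k k0 then c else 0) <= c.
Proof. intros Hc. induction n as [|n IH]; [simpl; lra|]. rewrite sum1_S.
  destruct (Nat.eqb (S n) k0) eqn:E.
  - apply Nat.eqb_eq in E; subst.
    assert (sum1 n (fun k => if Nat.eqb k (S n) then c else 0) = 0).
    { transitivity (sum1 n (fun _ => 0)).
      apply sum1_ext; intros s Hs; destruct (Nat.eqb_spec s (S n)); [lia|auto].
      rewrite sum1_const; ring. }
    lra.
  - lra.
Qed.

Lemma Dbd_sum n g x0 b : (forall s, (1 <= s <= n)%nat -> Dbd (g s) x0 (b s)) ->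
  Dbd (fun t => sum1 n (fun s => g s t)) x0 (sum1 n b).
Proof. induction n; intros H; simpl.
  apply Dbd_const.
  apply (Dbd_plus (fun t => sum1 n (fun s => g s t)) (g (S n))). apply IHn; intros; apply H; lia. apply H; lia. Qed.

Definition kidx (j : widx) : nat :=
  match j with Wout k => k | Wconv _ _ _ _ _ k => k | Wbias _ _ k => k end.

Lemma upd_same w i : upd w i (w i) = w.
Proof. apply functional_extensionality; intros j; unfold upd; destruct (widx_eq_dec i j); subst; auto. Qed.
Lemma upd_ne w i x j : kidx j <> kidx i -> upd w i x j = w j.
Proof. intros H; unfold upd; destruct (widx_eq_dec i j); subst; auto; congruence. Qed.

Lemma outp_S sigma d1 d2 kappa L w x r i j s2 k :
  outp sigma d1 d2 kappa L w x (S r) i j s2 k =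
      sigma (sum1 (ksz kappa L r) (fun s1 =>
               sum1 (Msz kappa L (S r)) (fun t1 =>
               sum1 (Msz kappa L (S r)) (fun t2 =>
                 if andb (Nat.leb (i + t1 - 1) d1) (Nat.leb (j + t2 - 1) d2)
                 then w (Wconv (S r) t1 t2 s1 s2 k) *
                      outp sigma d1 d2 kappa L w x r (i + t1 - 1) (j + t2 - 1) s1 k
                 else 0)))
             + w (Wbias (S r) s2 k)).
Proof. reflexivity. Qed.

Lemma outp_const sigma d1 d2 kappa L w xx i r : forall a b s k x, k <> kidx i ->
  outp sigma d1 d2 kappa L (upd w i x) xx r a b s k = outp sigma d1 d2 kappa L w xx r a b s k.
Proof.
  induction r; intros a b s k x Hk; [reflexivity|].
  rewrite !outp_S. f_equal. f_equal.
  - apply sum1_ext; intros; apply sum1_ext; intros; apply sum1_ext; intros.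
    destruct andb; auto. rewrite IHr, upd_ne; auto.
  - apply upd_ne; auto.
Qed.

Lemma fk_const sigma d1 d2 kappa L w xx i k x : k <> kidx i ->
  fk sigma d1 d2 kappa L (upd w i x) xx k = fk sigma d1 d2 kappa L w xx k.
Proof. intros Hk; unfold fk; cbv zeta. f_equal. apply sum1_ext; intros; apply sum1_ext; intros.
  apply outp_const; auto. Qed.

Fixpoint Ec (Sd N V : R) (r : nat) : R :=
  match r with O => 0 | S r => Sd * (N * V + 1) + Sd * N * Ec Sd N V r end.

Lemma Ec_nonneg Sd N V r : 0 <= Sd -> 0 <= N -> 0 <= V -> 0 <= Ec Sd N V r.
Proof. intros; induction r; simpl; [lra|].
  apply Rplus_le_le_0_compat; repeat apply Rmult_le_pos; try lra.
  apply Rplus_le_le_0_compat; [apply Rmult_le_pos|]; lra. Qed.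

Lemma count_bd kappa L r T : (1 <= kappa)%nat -> 0 <= T ->
  INR (ksz kappa L r) * (INR (Msz kappa L (S r)) * (INR (Msz kappa L (S r)) * T))
  <= INR (2 * kappa * kappa * kappa * kappa) * T.
Proof. intros Hk HT.
  replace (INR (ksz kappa L r) * (INR (Msz kappa L (S r)) * (INR (Msz kappa L (S r)) * T)))
    with (INR (ksz kappa L r * (Msz kappa L (S r) * Msz kappa L (S r))) * T)
    by (rewrite !mult_INR; ring).
  apply Rmult_le_compat_r; auto. apply le_INR.
  assert (ksz kappa L r <= 2 * kappa * kappa)%nat by (unfold ksz; destruct Nat.eqb; [|destruct Nat.eqb]; nia).
  assert (Msz kappa L (S r) <= kappa)%nat by (unfold Msz; destruct Nat.eqb; [|destruct Nat.eqb]; lia).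
  replace (2 * kappa * kappa * kappa * kappa)%nat with ((2*kappa*kappa) * (kappa*kappa))%nat by ring.
  apply Nat.mul_le_mono; auto. apply Nat.mul_le_mono; auto.
Qed.

Section Net.
Variables (sigma : R -> R) (Sb Sd V Bn : R) (d1 d2 kappa L Kn : nat) (w : wvec) (i : widx)
  (xx : nat -> nat -> R).
Hypothesis HS : forall x, Rabs (sigma x) <= Sb.
Hypothesis Hder : forall x, ex_derive sigma x.
Hypothesis HSd : forall x, Rabs (Derive sigma x) <= Sd.
Hypothesis HV1 : 1 <= V.
Hypothesis HSV : Sb <= V.
Hypothesis HBn : 1 <= Bn.
Hypothesis Hk1 : (1 <= kappa)%nat.
Hypothesis Hxx : forall a b, (1 <= a <= d1)%nat -> (1 <= b <= d2)%nat -> 0 <= xx a b <= 1.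
Hypothesis Hw : forall r t1 t2 s1 s2 k, (2 <= r <= L)%nat ->
     (1 <= t1 <= Msz kappa L r)%nat -> (1 <= t2 <= Msz kappa L r)%nat ->
     (1 <= s1 <= ksz kappa L (r - 1))%nat -> (1 <= s2 <= ksz kappa L r)%nat ->
     (1 <= k <= Kn)%nat -> Rabs (w (Wconv r t1 t2 s1 s2 k)) <= Bn.

Let N := INR (2 * kappa * kappa * kappa * kappa).

Lemma Sd_nonneg : 0 <= Sd.
Proof. eapply Rle_trans; [apply Rabs_pos|apply (HSd 0)]. Qed.
Lemma N_nonneg : 0 <= N.
Proof. apply pos_INR. Qed.

Lemma outp_bd : forall r, (r <= L)%nat -> forall a b s k, (1 <= a)%nat -> (1 <= b)%nat ->
  (1 <= s <= ksz kappa L r)%nat -> (1 <= k <= Kn)%nat -> (r = 0 -> a <= d1 /\ b <= d2)%nat ->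
  Rabs (outp sigma d1 d2 kappa L w xx r a b s k) <= V /\
  Dbd (fun x => outp sigma d1 d2 kappa L (upd w i x) xx r a b s k) (w i) (Ec Sd N V r * Bn ^ r).
Proof.
  pose proof Sd_nonneg as HSd0. pose proof N_nonneg as HN0.
  induction r as [|r IH]; intros HrL a b s k Ha Hb Hs Hk H0.
  - split.
    + simpl. destruct (H0 eq_refl). destruct (Hxx a b) as [h1 h2]; try lia. rewrite Rabs_pos_eq; lra.
    + simpl. eapply Dbd_le; [|apply Dbd_const]. lra.
  - split.
    + rewrite outp_S. eapply Rle_trans; [apply HS|lra].
    + set (T := V + Ec Sd N V r * Bn ^ S r).
      assert (HEr : 0 <= Ec Sd N V r) by (apply Ec_nonneg; lra).
      assert (HP1 : 1 <= Bn ^ S r) by (apply pow_R1_Rle; lra).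
      assert (HT : 0 <= T) by (unfold T; assert (0 <= Ec Sd N V r * Bn ^ S r) by (apply Rmult_le_pos; lra); lra).
      apply Dbd_ext with (fun x => sigma (sum1 (ksz kappa L r) (fun s1 =>
               sum1 (Msz kappa L (S r)) (fun t1 =>
               sum1 (Msz kappa L (S r)) (fun t2 =>
                 if andb (Nat.leb (a + t1 - 1) d1) (Nat.leb (b + t2 - 1) d2)
                 then upd w i x (Wconv (S r) t1 t2 s1 s k) *
                      outp sigma d1 d2 kappa L (upd w i x) xx r (a + t1 - 1) (b + t2 - 1) s1 k
                 else 0)))
             + upd w i x (Wbias (S r) s k))).
      { intros; symmetry; apply outp_S. }
      eapply Dbd_le; [|apply Dbd_comp with (Sd := Sd); auto; apply Dbd_plus; [|apply Dbd_upd]].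
      2: { apply (Dbd_sum _ _ _ (fun _ => sum1 (Msz kappa L (S r)) (fun _ => sum1 (Msz kappa L (S r)) (fun _ => T)))).
           intros s1 Hs1.
           apply (Dbd_sum _ _ _ (fun _ => sum1 (Msz kappa L (S r)) (fun _ => T))).
           intros t1 Ht1.
           apply (Dbd_sum _ _ _ (fun _ => T)).
           intros t2 Ht2.
           destruct (andb (Nat.leb (a + t1 - 1) d1) (Nat.leb (b + t2 - 1) d2)) eqn:G.
           2: { eapply Dbd_le; [|apply Dbd_const]; lra. }
           destruct (IH ltac:(lia) (a + t1 - 1)%nat (b + t2 - 1)%nat s1 k) as [IHv IHd]; try lia.
           { intros ->. apply andb_prop in G as [G1 G2]. apply Nat.leb_le in G1, G2. lia. }
           eapply Dbd_le; [|apply (Dbd_mult _ _ _ _ _ (Rabs (w (Wconv (S r) t1 t2 s1 s k))) V (Dbd_upd w i _) IHd)].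
           2: { rewrite upd_same; lra. }
           2: { rewrite upd_same; auto. }
           unfold T. destruct r as [|r'].
           - simpl. lra.
           - assert (Rabs (w (Wconv (S (S r')) t1 t2 s1 s k)) <= Bn).
             { apply Hw; try lia. replace (S (S r') - 1)%nat with (S r') by lia. lia. }
             replace (Bn ^ S (S r')) with (Bn * Bn ^ S r') by (simpl; ring).
             assert (0 <= Ec Sd N V (S r') * Bn ^ S r') by (apply Rmult_le_pos; [auto|apply pow_le; lra]).
             assert (Rabs (w (Wconv (S (S r')) t1 t2 s1 s k)) * (Ec Sd N V (S r') * Bn ^ S r')
                      <= Bn * (Ec Sd N V (S r') * Bn ^ S r')) by (apply Rmult_le_compat_r; auto).
             lra. }
      rewrite !sum1_const.
      pose proof (count_bd kappa L r T Hk1 HT) as HC. fold N in HC.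
      simpl Ec. unfold T in *.
      set (P := Bn ^ S r) in *.
      assert (0 <= Sd * (N * V + 1) * (P - 1)) by (assert (0 <= N * V) by (apply Rmult_le_pos; lra); repeat apply Rmult_le_pos; lra).
      assert (((INR (ksz kappa L r) * (INR (Msz kappa L (S r)) * (INR (Msz kappa L (S r)) * (V + Ec Sd N V r * P)))) + 1) * Sd
              <= (N * (V + Ec Sd N V r * P) + 1) * Sd) by (apply Rmult_le_compat_r; lra).
      nra.
Qed.

Hypothesis HL : (2 <= L)%nat.

Lemma avg_bd p q (g : nat -> nat -> R) c : (1 <= p)%nat -> (1 <= q)%nat ->
  (forall a b, (1 <= a <= p)%nat -> (1 <= b <= q)%nat -> Rabs (g a b) <= c) ->
  Rabs (/ (INR p * INR q) * sum1 p (fun a => sum1 q (fun b => g a b))) <= c.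
Proof. intros Hp Hq H.
  assert (0 < INR p) by (apply lt_0_INR; lia). assert (0 < INR q) by (apply lt_0_INR; lia).
  rewrite Rabs_mult, Rabs_inv, Rabs_mult, !Rabs_pos_eq by lra.
  assert (Rabs (sum1 p (fun a => sum1 q (fun b => g a b))) <= INR p * (INR q * c)).
  { apply sum1_abs_bd; intros; apply sum1_abs_bd; intros; apply H; auto. }
  apply Rle_trans with (/ (INR p * INR q) * (INR p * (INR q * c))).
  apply Rmult_le_compat_l; auto. left; apply Rinv_0_lt_compat, Rmult_lt_0_compat; auto.
  right; field; lra.
Qed.

Lemma ksz_L : ksz kappa L L = 1%nat.
Proof. unfold ksz. destruct (Nat.eqb_spec L 0); [lia|]. rewrite Nat.eqb_refl; auto. Qed.

Lemma fk_bd k : (1 <= k <= Kn)%nat ->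
  Rabs (fk sigma d1 d2 kappa L w xx k) <= V /\ Dbd (fun x => fk sigma d1 d2 kappa L (upd w i x) xx k) (w i) (Ec Sd N V L * Bn ^ L).
Proof. intros Hk. unfold fk; cbv zeta.
  set (p := (d1 - Msz kappa L (S L) + 1)%nat). set (q := (d2 - Msz kappa L (S L) + 1)%nat).
  assert (Hp : (1 <= p)%nat) by lia. assert (Hq : (1 <= q)%nat) by lia.
  assert (0 < INR p) by (apply lt_0_INR; lia). assert (0 < INR q) by (apply lt_0_INR; lia).
  split.
  - apply avg_bd; auto. intros a b Ha Hb. apply outp_bd; try lia. rewrite ksz_L; lia.
  - eapply Dbd_le; [|apply Dbd_scal;
      apply (Dbd_sum _ _ _ (fun _ => sum1 q (fun _ => Ec Sd N V L * Bn ^ L))); intros a Ha;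
      apply (Dbd_sum _ _ _ (fun _ => Ec Sd N V L * Bn ^ L)); intros b Hb;
      apply outp_bd; try lia; rewrite ksz_L; lia].
    rewrite !sum1_const, Rabs_inv, Rabs_mult, !Rabs_pos_eq by lra.
    right; field; lra.
Qed.

Variable gam : R.
Hypothesis Hgam : 1 <= gam.
Hypothesis Hwout : forall k, (1 <= k <= Kn)%nat -> Rabs (w (Wout k)) <= gam.

Let EB := Ec Sd N V L * Bn ^ L.

Lemma fnet_bd :
  Rabs (fnet sigma d1 d2 kappa L Kn w xx) <= INR Kn * (gam * V) /\ Dbd (fun x => fnet sigma d1 d2 kappa L Kn (upd w i x) xx) (w i) (V + gam * EB).
Proof. unfold fnet. split.
  - apply sum1_abs_bd; intros k Hk. rewrite Rabs_mult.
    destruct (fk_bd k Hk). apply Rmult_le_compat; auto using Rabs_pos.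
  - eapply Dbd_le; [apply (sum1_delta Kn (kidx i))|].
    { assert (0 <= EB) by (apply Rmult_le_pos; [apply Ec_nonneg; pose proof Sd_nonneg; pose proof N_nonneg; lra|apply pow_le; lra]). nra. }
    apply Dbd_sum; intros k Hk.
    destruct (Nat.eqb_spec k (kidx i)).
    + destruct (fk_bd k Hk) as [Hv Hd].
      eapply Dbd_le; [|apply (Dbd_mult _ _ _ _ _ gam V (Dbd_upd w i _) Hd)].
      unfold EB; lra. rewrite upd_same; auto. rewrite upd_same; auto.
    + apply Dbd_constf; intros t. rewrite !fk_const, !upd_ne; simpl; auto.
Qed.
End Net.

Section F.
Variables (sigma : R -> R) (Sb Sd V Bn : R) (d1 d2 kappa L Kn : nat) (w : wvec) (i : widx).
Hypothesis HS : forall x, Rabs (sigma x) <= Sb.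
Hypothesis Hder : forall x, ex_derive sigma x.
Hypothesis HSd : forall x, Rabs (Derive sigma x) <= Sd.
Hypothesis HV1 : 1 <= V.
Hypothesis HSV : Sb <= V.
Hypothesis HBn : 1 <= Bn.
Hypothesis Hk1 : (1 <= kappa)%nat.
Hypothesis Hw : forall r t1 t2 s1 s2 k, (2 <= r <= L)%nat ->
     (1 <= t1 <= Msz kappa L r)%nat -> (1 <= t2 <= Msz kappa L r)%nat ->
     (1 <= s1 <= ksz kappa L (r - 1))%nat -> (1 <= s2 <= ksz kappa L r)%nat ->
     (1 <= k <= Kn)%nat -> Rabs (w (Wconv r t1 t2 s1 s2 k)) <= Bn.
Hypothesis HL : (2 <= L)%nat.
Variable gam : R.
Hypothesis Hgam : 1 <= gam.
Hypothesis Hwout : forall k, (1 <= k <= Kn)%nat -> Rabs (w (Wout k)) <= gam.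
Variables (n : nat) (X : nat -> nat -> nat -> R) (Y : nat -> R) (c4 : R).
Hypothesis Hn : (1 <= n)%nat.
Hypothesis Hc4 : 0 < c4.
Hypothesis HX : forall j a b, (1 <= j <= n)%nat -> (1 <= a <= d1)%nat -> (1 <= b <= d2)%nat ->
     0 <= X j a b <= 1.
Hypothesis HY : forall j, (1 <= j <= n)%nat -> Y j = 0 \/ Y j = 1.

Let EB := Ec Sd (INR (2 * kappa * kappa * kappa * kappa)) V L * Bn ^ L.

Lemma Femp_bd :
  Dbd (fun x => Femp sigma d1 d2 kappa L n Kn c4 X Y (upd w i x)) (w i)
    (2 * (1 + INR Kn * (gam * V)) * (V + gam * EB) + c4 * (2 * gam * 1)).
Proof.
  assert (Hn0 : 0 < INR n) by (apply lt_0_INR; lia).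
  unfold Femp.
  eapply Dbd_le; [|apply Dbd_plus; apply Dbd_scal;
     [apply (Dbd_sum _ _ _ (fun _ => 2 * (1 + INR Kn * (gam * V)) * (V + gam * EB)))
     |apply (Dbd_sum _ _ _ (fun k => if Nat.eqb k (kidx i) then 2 * gam * 1 else 0))]].
  - rewrite sum1_const, Rabs_inv, (Rabs_pos_eq (INR n)), (Rabs_pos_eq c4) by lra.
    assert (sum1 Kn (fun k => if Nat.eqb k (kidx i) then 2 * gam * 1 else 0) <= 2 * gam * 1)
      by (apply sum1_delta; lra).
    assert (c4 * sum1 Kn (fun k => if Nat.eqb k (kidx i) then 2 * gam * 1 else 0) <= c4 * (2 * gam * 1))
      by (apply Rmult_le_compat_l; lra).
    replace (/ INR n * (INR n * (2 * (1 + INR Kn * (gam * V)) * (V + gam * EB))))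
      with (2 * (1 + INR Kn * (gam * V)) * (V + gam * EB)) by (field; lra).
    lra.
  - intros j Hj.
    destruct (fnet_bd sigma Sb Sd V Bn d1 d2 kappa L Kn w i (X j)) with (gam := gam)
      as [Hv Hd]; auto.
    eapply Dbd_le; [|apply Dbd_sq with (v := 1 + INR Kn * (gam * V)); [apply Dbd_minus; [apply Dbd_const|apply Hd]|]].
    + assert (0 <= 1 + INR Kn * (gam * V)).
      { assert (0 <= INR Kn * (gam * V)) by (apply Rmult_le_pos; [apply pos_INR|nra]). lra. }
      unfold EB; right; ring.
    + rewrite upd_same. unfold Rminus. eapply Rle_trans; [apply Rabs_triang|].
      rewrite Rabs_Ropp. destruct (HY j Hj) as [-> | ->]; rewrite ?Rabs_R0, ?Rabs_R1; lra.
  - intros k Hk.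
    destruct (widx_eq_dec i (Wout k)) as [E|E].
    + subst i. simpl kidx. rewrite Nat.eqb_refl.
      apply Dbd_sq. apply Dbd_upd. rewrite upd_same; auto.
    + eapply Dbd_le; [|apply Dbd_constf].
      destruct Nat.eqb; lra.
      intros t. unfold upd. destruct (widx_eq_dec i (Wout k)); [congruence|]. reflexivity.
Qed.
End F.

Lemma sum_idx_le kappa L Kn g h : (forall j, g j <= h j) -> sum_idx kappa L Kn g <= sum_idx kappa L Kn h.
Proof. intros H. unfold sum_idx. repeat apply Rplus_le_compat; repeat (apply sum1_le; intros); apply H. Qed.

Definition Qc kappa L : R := 1 + sum1 L (fun r => sum1 (Msz kappa L r) (fun _ => sum1 (Msz kappa L r) (fun _ =>
      sum1 (ksz kappa L (r - 1)) (fun _ => sum1 (ksz kappa L r) (fun _ => 1)))))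
  + sum1 L (fun r => sum1 (ksz kappa L r) (fun _ => 1)).

Lemma sum_idx_const kappa L Kn c : sum_idx kappa L Kn (fun _ => c) = INR Kn * c * Qc kappa L.
Proof. unfold sum_idx, Qc. rewrite !Rmult_plus_distr_l, Rmult_1_r.
  f_equal; [f_equal|].
  - apply sum1_const.
  - repeat (rewrite <- sum1_scal; apply sum1_ext; intros ? ?; cbv beta); try rewrite sum1_const; ring.
  - repeat (rewrite <- sum1_scal; apply sum1_ext; intros ? ?; cbv beta); try rewrite sum1_const; ring.
Qed.

Lemma Qc_nonneg kappa L : 0 <= Qc kappa L.
Proof. unfold Qc. assert (forall n f, (forall s, 0 <= f s) -> 0 <= sum1 n f).
  { intros; apply sum1_nonneg; auto. }
  assert (0 <= sum1 L (fun r => sum1 (Msz kappa L r) (fun _ => sum1 (Msz kappa L r) (fun _ =>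
      sum1 (ksz kappa L (r - 1)) (fun _ => sum1 (ksz kappa L r) (fun _ => 1)))))).
  { repeat (apply H; intros). lra. }
  assert (0 <= sum1 L (fun r => sum1 (ksz kappa L r) (fun _ => 1))).
  { repeat (apply H; intros). lra. }
  lra.
Qed.

Theorem lemma3 :
  forall (sigma : R -> R),
  (exists S, forall x, Rabs (sigma x) <= S) ->
  (forall x, ex_derive sigma x) ->
  (exists S', forall x, Rabs (Derive sigma x) <= S') ->
  forall (d1 d2 kappa L : nat) (c4 : R),
  (1 <= kappa)%nat -> (kappa <= Nat.min d1 d2)%nat -> (2 <= L)%nat -> 0 < c4 ->
  exists c8 : R, 0 < c8 /\
  forall (n Kn : nat) (X : nat -> nat -> nat -> R) (Y : nat -> R)
         (tn Ln gam Bn : R) (w v : wvec),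
  (1 <= n)%nat -> (1 <= Kn)%nat ->
  (forall i a b, (1 <= i <= n)%nat -> (1 <= a <= d1)%nat -> (1 <= b <= d2)%nat ->
     0 <= X i a b <= 1) ->
  (forall i, (1 <= i <= n)%nat -> Y i = 0 \/ Y i = 1) ->
  0 < tn -> 0 < Ln -> Ln <= tn -> 1 <= gam -> 1 <= Bn ->
  (forall k, (1 <= k <= Kn)%nat -> Rabs (w (Wout k)) <= gam) ->
  (forall r s2 k, (2 <= r <= L)%nat -> (1 <= s2 <= ksz kappa L r)%nat ->
     (1 <= k <= Kn)%nat -> Rabs (w (Wbias r s2 k)) <= Bn) ->
  (forall r t1 t2 s1 s2 k, (2 <= r <= L)%nat ->
     (1 <= t1 <= Msz kappa L r)%nat -> (1 <= t2 <= Msz kappa L r)%nat ->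
     (1 <= s1 <= ksz kappa L (r - 1))%nat -> (1 <= s2 <= ksz kappa L r)%nat ->
     (1 <= k <= Kn)%nat -> Rabs (w (Wconv r t1 t2 s1 s2 k)) <= Bn) ->
  (inf_dist kappa L Kn w v) ^ 2 <=
    2 * tn / Ln * Rmax (Femp sigma d1 d2 kappa L n Kn c4 X Y v) 1 ->
  grad_norm kappa L Kn (Femp sigma d1 d2 kappa L n Kn c4 X Y) w <=
    c8 * Rpower (INR Kn) (3 / 2) * Bn ^ (2 * L) * gam ^ 2 *
    sqrt (tn / Ln * Rmax (Femp sigma d1 d2 kappa L n Kn c4 X Y v) 1).
Proof.
  intros sigma [Sb HS] Hder [Sd HSd] d1 d2 kappa L c4 Hk1 Hkd HL Hc4.
  set (V := Rmax Sb 1).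
  assert (HV1 : 1 <= V) by apply Rmax_r.
  assert (HSV : Sb <= V) by apply Rmax_l.
  assert (HSd0 : 0 <= Sd) by (eapply Rle_trans; [apply Rabs_pos|apply (HSd 0)]).
  set (N := INR (2 * kappa * kappa * kappa * kappa)).
  assert (HN : 0 <= N) by apply pos_INR.
  set (E := Ec Sd N V L).
  assert (HE : 0 <= E) by (apply Ec_nonneg; lra).
  set (C0 := 2 * (1 + V) * (V + E) + 2 * c4).
  assert (HC0 : 0 < C0) by (unfold C0; assert (0 <= (1 + V) * (V + E)) by (apply Rmult_le_pos; lra); lra).
  set (Q := Qc kappa L).
  assert (HQ : 0 <= Q) by apply Qc_nonneg.
  exists (C0 * sqrt Q + 1). split.
  { assert (0 <= C0 * sqrt Q) by (apply Rmult_le_pos; [lra|apply sqrt_pos]). lra. }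
  intros n Kn X Y tn Ln gam Bn w v Hn HKn HX HY Htn HLn HLt Hgam HBn Hwout Hbias Hw _.
  set (K := INR Kn).
  assert (HK : 1 <= K) by (unfold K; apply (le_INR 1); lia).
  set (BL := Bn ^ L).
  assert (HBL : 1 <= BL) by (apply pow_R1_Rle; lra).
  set (P0 := C0 * K * gam ^ 2 * BL).
  assert (Hpart : forall j, Rabs (partial (Femp sigma d1 d2 kappa L n Kn c4 X Y) w j) <= P0).
  { intros j.
    destruct (Femp_bd sigma Sb Sd V Bn d1 d2 kappa L Kn w j HS Hder HSd HV1 HSV HBn Hk1 Hw HL gam Hgam Hwout n X Y c4 Hn Hc4 HX HY) as [d [Hd Hdb]].
    unfold partial. rewrite (is_derive_unique _ _ _ Hd).
    eapply Rle_trans; [apply Hdb|]. fold N. fold E. fold K. fold BL.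
    assert (Hg1 : 1 <= K * gam) by nra.
    assert (a1 : 1 + K * (gam * V) <= K * gam * (1 + V)) by nra.
    assert (Hg2 : 1 <= gam * BL) by nra.
    assert (a2 : V + gam * (E * BL) <= gam * BL * (V + E)) by nra.
    assert (a3 : 2 * (1 + K * (gam * V)) * (V + gam * (E * BL)) <= 2 * (K * gam * (1 + V)) * (gam * BL * (V + E))).
    { apply Rmult_le_compat; try lra.
      assert (0 <= K * (gam * V)) by (apply Rmult_le_pos; nra). lra.
      assert (0 <= gam * (E * BL)) by (apply Rmult_le_pos; nra). lra. }
    assert (a4 : c4 * (2 * gam * 1) <= 2 * c4 * (K * gam ^ 2 * BL)).
    { assert (1 <= K * gam * BL) by nra. assert (gam <= K * gam ^ 2 * BL) by nra. nra. }
    unfold P0, C0. nra. }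
  assert (HP0 : 0 <= P0) by (eapply Rle_trans; [apply Rabs_pos|apply (Hpart (Wout 1))]).
  unfold grad_norm.
  apply Rle_trans with (sqrt (K * P0 ^ 2 * Q)).
  { apply sqrt_le_1_alt. unfold K, Q. rewrite <- sum_idx_const. apply sum_idx_le.
    intros j. rewrite <- pow2_abs. apply pow_incr. split; [apply Rabs_pos|apply Hpart]. }
  assert (0 <= P0 ^ 2) by apply pow2_ge_0.
  rewrite (sqrt_mult_alt (K * P0 ^ 2) Q) by (apply Rmult_le_pos; lra).
  rewrite (sqrt_mult_alt K (P0 ^ 2)) by lra.
  rewrite (sqrt_pow2 P0) by lra.
  replace (3 / 2) with (1 + / 2) by field.
  assert (HK0 : 0 < K) by lra.
  rewrite Rpower_plus, Rpower_1, Rpower_sqrt by lra. fold K.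
  set (T := tn / Ln * Rmax (Femp sigma d1 d2 kappa L n Kn c4 X Y v) 1).
  assert (HT : 1 <= sqrt T).
  { rewrite <- sqrt_1. apply sqrt_le_1_alt. unfold T.
    assert (1 <= tn / Ln) by (apply (Rmult_le_reg_r Ln); [lra|]; field_simplify; lra).
    assert (1 <= Rmax (Femp sigma d1 d2 kappa L n Kn c4 X Y v) 1) by apply Rmax_r.
    nra. }
  assert (HB2 : BL <= Bn ^ (2 * L)) by (apply Rle_pow; lia || lra).
  assert (HsK : 0 <= sqrt K) by apply sqrt_pos.
  assert (HsQ : 0 <= sqrt Q) by apply sqrt_pos.
  set (A := C0 * sqrt Q * K * sqrt K * gam ^ 2).
  assert (HA : 0 <= A) by (unfold A; repeat apply Rmult_le_pos; nra).
  apply Rle_trans with (A * BL). { unfold A, P0. right; ring. }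
  apply Rle_trans with ((C0 * sqrt Q + 1) * K * sqrt K * gam ^ 2 * Bn ^ (2 * L)).
  { assert (A <= (C0 * sqrt Q + 1) * K * sqrt K * gam ^ 2).
    { unfold A. assert (0 <= K * sqrt K * gam ^ 2) by (repeat apply Rmult_le_pos; nra). nra. }
    assert (0 <= (C0 * sqrt Q + 1) * K * sqrt K * gam ^ 2) by lra.
    replace ((C0 * sqrt Q + 1) * K * sqrt K * gam ^ 2 * Bn ^ (2 * L))
      with (((C0 * sqrt Q + 1) * K * sqrt K * gam ^ 2) * Bn ^ (2 * L)) by ring.
    apply Rmult_le_compat; lra. }
  set (Z := (C0 * sqrt Q + 1) * K * sqrt K * gam ^ 2 * Bn ^ (2 * L)).
  assert (HZ : 0 <= Z) by (unfold Z; repeat apply Rmult_le_pos; try nra; apply pow_le; lra).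
  replace ((C0 * sqrt Q + 1) * (K * sqrt K) * Bn ^ (2 * L) * gam ^ 2 * sqrt T) with (Z * sqrt T) by (unfold Z; ring).
  nra.
Qed.
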